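(* Let $n = 4k+3$ with $k\ge 0$ an integer, and let $m \ge 3n+5$. Then every product $(a,a+2)(b,b+2)\in S_m$ of two even-string transpositions, and every such product of two odd-string transpositions, with $a,a+2,b,b+2$ four distinct numbers, is a product of $n$-crossing permutations over $S_m$.
   Context: For integers $2\le n\le m$ and $1 \le j \le m-n+1$, the $n$-crossing permutation $\pi_j\in S_m$ is $\pi_j=(j,\,j+n-1)(j+1,\,j+n-2)\cdots$, i.e. the involution sending $i \mapsto 2j+n-1-i$ for $j\le i\le j+n-1$ and fixing all other elements of $\{1,\dots,m\}$. The $n$-crossing permutations over $S_m$ are $\pi_1,\dots,\pi_{m-n+1}$. A transposition $(i,i+2)\in S_m$ (with $1\le i\le m-2$) is called an even-string transposition if $i$ is even and an odd-string transposition if $i$ is odd. *)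

(* Defs.v *)
From mathcomp Require Import all_boot all_order all_fingroup.
From mathcomp Require Import zify.
Set Implicit Arguments. Unset Strict Implicit. Unset Printing Implicit Defensive.

(* Points of S_m are 1..m; the ordinal x : 'I_m represents the point x+1. *)

Definition invol_on (m : nat) (g : nat -> nat) : bool :=
  [forall x : 'I_m, (1 <= g x.+1 <= m) && (g (g x.+1) == x.+1)].

Definition perm_fun (m : nat) (g : nat -> nat) (x : 'I_m) : 'I_m :=
  if invol_on m g then insubd x (g x.+1).-1 else x.

Lemma perm_fun_invol m g : involutive (@perm_fun m g).
Proof.
move=> x; rewrite /perm_fun; case H: (invol_on m g) => //.
move/forallP: (H) => Hx.
have /andP [/andP [l1 l2] e1] := Hx x.
have hin : (g x.+1).-1 < m by lia.
rewrite (insubdK x hin).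
have -> : (g x.+1).-1.+1 = g x.+1 by lia.
rewrite (eqP e1) /=.
by rewrite /insubd valK.
Qed.

(* The permutation of {1..m} induced by g (identity if g is not an involution of {1..m}) *)
Definition perm_of (m : nat) (g : nat -> nat) : {perm 'I_m} :=
  perm (can_inj (@perm_fun_invol m g)).

Definition cross (n j i : nat) : nat :=
  if (j <= i) && (i <= j + n - 1) then 2 * j + n - 1 - i else i.

Definition crossing_perm (m n j : nat) : {perm 'I_m} := perm_of m (cross n j).

Definition crossing_perms (m n : nat) : {set {perm 'I_m}} :=
  [set crossing_perm m n j.+1 | j : 'I_(m - n + 1)].

Definition swap2 (a i : nat) : nat :=
  if i == a then a + 2 else if i == a + 2 then a else i.

Definition string_transp (m a : nat) : {perm 'I_m} := perm_of m (swap2 a).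

(* Main.v *)
Require Import Defs.
From mathcomp Require Import all_boot all_order all_fingroup.
From mathcomp Require Import zify.
Set Implicit Arguments. Unset Strict Implicit. Unset Printing Implicit Defensive.

Lemma crossP n j i : ((j <= i <= j + n - 1) /\ cross n j i = 2 * j + n - 1 - i)
  \/ (~~ (j <= i <= j + n - 1) /\ cross n j i = i).
Proof. rewrite /cross; case: ifP => h; [left|right]; split => //; by rewrite h. Qed.

Ltac case_cross :=
  match goal with |- context [cross ?n ?j ?i] =>
    lazymatch i with context [cross _ _ _] => fail | _ =>
    case: (crossP n j i) => [[? ->]|[? ->]] end end.

Ltac case_if :=
  match goal with |- context [if ?b then _ else _] =>
    lazymatch b with context [if _ then _ else _] => fail | _ =>
    case: (boolP b) => ? end end.

Lemma crossW k j X : 1 <= j -> 1 <= X ->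
  cross (4 * k + 3) j (cross (4 * k + 3) j.+1 (cross (4 * k + 3) j.+2 (cross (4 * k + 3) j.+1 X))) =
  if (if X == j then j + (4 * k + 3) + 1 else if X == j + (4 * k + 3) + 1 then j else X) == j + (4 * k + 3) + 1
  then j + (4 * k + 3) - 1 else if (if X == j then j + (4 * k + 3) + 1 else if X == j + (4 * k + 3) + 1 then j else X) == j + (4 * k + 3) - 1
  then j + (4 * k + 3) + 1 else (if X == j then j + (4 * k + 3) + 1 else if X == j + (4 * k + 3) + 1 then j else X).
Proof.
move=> j1 X1.
repeat case_if; repeat (case_cross; try (exfalso; lia)); lia.
Qed.

Definition pt (m i : nat) : 'I_m.+1 := inord i.-1.

Lemma val_pt m i : 1 <= i <= m.+1 -> nat_of_ord (pt m i) = i.-1.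
Proof. move=> h; rewrite /pt /= inordK //; lia. Qed.

Lemma pt_neq m i j : 1 <= i <= m.+1 -> 1 <= j <= m.+1 -> i != j -> pt m i != pt m j.
Proof. move=> hi hj hij; apply/eqP => /(congr1 (@nat_of_ord _)); rewrite !val_pt //; lia. Qed.

Lemma perm_ofE m g (x : 'I_m) : invol_on m g -> (nat_of_ord (Defs.perm_of m g x)).+1 = g (nat_of_ord x).+1.
Proof.
move=> H; rewrite /perm_of permE /perm_fun H.
move/forallP: H => /(_ x) /andP [/andP [l1 l2] _].
rewrite insubdK /=; first lia.
rewrite unfold_in /=; lia.
Qed.

Lemma invol_cross m k j : 1 <= j -> j + (4 * k + 3) - 1 <= m -> invol_on m (cross (4 * k + 3) j).
Proof.
move=> h1 h2; apply/forallP => x; have := ltn_ord x; move: (nat_of_ord x) => X hX.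
repeat (case_cross; try (exfalso; lia)); lia.
Qed.

Lemma invol_swap2 m a : 1 <= a -> a + 2 <= m -> invol_on m (swap2 a).
Proof.
move=> h1 h2; apply/forallP => x; have := ltn_ord x; move: (nat_of_ord x) => X hX.
rewrite /swap2; repeat case_if; lia.
Qed.

Lemma tpt m u v (w : 'I_m.+1) : 1 <= u <= m.+1 -> 1 <= v <= m.+1 ->
  (nat_of_ord (tperm (pt m u) (pt m v) w)).+1 =
  if (nat_of_ord w).+1 == u then v else if (nat_of_ord w).+1 == v then u else (nat_of_ord w).+1.
Proof.
move=> hu hv.
have eq1 i : 1 <= i <= m.+1 -> (w == pt m i) = ((nat_of_ord w).+1 == i).
  move=> hi; apply/eqP/eqP => [->|h]; first by rewrite val_pt //; lia.
  by apply: ord_inj; rewrite val_pt //; lia.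
case: tpermP => [->|->|/eqP h1 /eqP h2].
- rewrite !val_pt //; repeat case_if; lia.
- rewrite !val_pt //; repeat case_if; lia.
- rewrite eq1 // in h1; rewrite eq1 // in h2; repeat case_if; lia.
Qed.

Lemma string_tp m a : 1 <= a -> a + 2 <= m.+1 ->
  string_transp m.+1 a = tperm (pt m a) (pt m (a + 2)).
Proof.
move=> h1 h2; apply/permP => x; apply/ord_inj/succn_inj.
rewrite /string_transp perm_ofE ?invol_swap2 // tpt //; lia.
Qed.

Lemma cross_pt m k j i : 1 <= j -> j + (4 * k + 3) - 1 <= m.+1 -> 1 <= i <= m.+1 ->
  crossing_perm m.+1 (4 * k + 3) j (pt m i) = pt m (cross (4 * k + 3) j i).
Proof.
move=> h1 h2 h3; apply/ord_inj/succn_inj.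
rewrite /crossing_perm perm_ofE ?invol_cross // !val_pt //.
- repeat case_cross; lia.
- repeat case_cross; lia.
Qed.

Definition c3 (T : finType) (x y z : T) : {perm T} := (tperm x y * tperm y z)%g.

Lemma c3_rot (T : finType) (x y z : T) : x != y -> x != z ->
  c3 x y z = c3 y z x.
Proof.
move=> hxy hxz; rewrite /c3 conjgC tpermJ tpermD 1?eq_sym // tpermL.
by rewrite (tpermC z x).
Qed.

Lemma c3_inv (T : finType) (x y z : T) : ((c3 x y z)^-1)%g = c3 z y x.
Proof. by rewrite /c3 invMg !tpermV tpermC (tpermC y x). Qed.

Lemma c3J (T : finType) (x y z : T) (g : {perm T}) : ((c3 x y z) ^ g)%g = c3 (g x) (g y) (g z).
Proof. by rewrite /c3 conjMg !tpermJ. Qed.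

Lemma Wc3 m k j : 1 <= j -> j + (4 * k + 3) + 1 <= m.+1 ->
  (crossing_perm m.+1 (4 * k + 3) j.+1 * crossing_perm m.+1 (4 * k + 3) j.+2 *
   crossing_perm m.+1 (4 * k + 3) j.+1 * crossing_perm m.+1 (4 * k + 3) j)%g =
  c3 (pt m j) (pt m (j + (4 * k + 3) + 1)) (pt m (j + (4 * k + 3) - 1)).
Proof.
move=> h1 h2; apply/permP => x; apply/ord_inj/succn_inj.
rewrite !permM /crossing_perm !perm_ofE; try (apply: invol_cross; lia).
rewrite !tpt; try lia.
exact: crossW.
Qed.

Theorem lemma4p3 (k m a b : nat) :
  3 * (4 * k + 3) + 5 <= m ->
  1 <= a -> a + 2 <= m -> 1 <= b -> b + 2 <= m ->
  odd a = odd b ->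
  uniq [:: a; a + 2; b; b + 2] ->
  (string_transp m a * string_transp m b)%g
    \in <<crossing_perms m (4 * k + 3)>>%g.
Proof.
case: m => [|m] hm; first lia.
move=> a1 a2 b1 b2 ab u.
set G := <<crossing_perms m.+1 (4 * k + 3)>>%g.
have Pin j : 1 <= j -> j + (4 * k + 3) - 1 <= m.+1 -> crossing_perm m.+1 (4 * k + 3) j \in G.
  move=> j1 j2; have hj : j.-1 < m.+1 - (4 * k + 3) + 1 by lia.
  apply/mem_gen/imsetP; exists (Ordinal hj) => //=.
  by rewrite prednK.
have S1 j : 1 <= j -> j + (4 * k + 3) + 1 <= m.+1 ->
    c3 (pt m j) (pt m (j + (4 * k + 3) + 1)) (pt m (j + (4 * k + 3) - 1)) \in G.
  move=> j1 j2; rewrite -Wc3 //.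
  by repeat apply: groupM; apply: Pin; lia.
have S2 p : 1 <= p -> p + 4 <= m.+1 -> c3 (pt m p) (pt m (p + 2)) (pt m (p + 4)) \in G.
  move=> p1 p2; case: (leqP (p + (4 * k + 3) + 1) m.+1) => hp.
  - have := groupJ (S1 p p1 hp) (Pin (p + 2) ltac:(lia) ltac:(lia)).
    rewrite c3J !cross_pt; try lia.
    have -> : cross (4 * k + 3) (p + 2) p = p by case_cross; lia.
    have -> : cross (4 * k + 3) (p + 2) (p + (4 * k + 3) + 1) = p + 2 by case_cross; lia.
    have -> : cross (4 * k + 3) (p + 2) (p + (4 * k + 3) - 1) = p + 4 by case_cross; lia.
    done.
  - have := groupJ (S1 (p + 3 - (4 * k + 3)) ltac:(lia) ltac:(lia))
                   (Pin (p + 2 - (4 * k + 3)) ltac:(lia) ltac:(lia)).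
    rewrite c3J !cross_pt; try lia.
    have -> : cross (4 * k + 3) (p + 2 - (4 * k + 3)) (p + 3 - (4 * k + 3)) = p by case_cross; lia.
    have -> : cross (4 * k + 3) (p + 2 - (4 * k + 3)) (p + 3 - (4 * k + 3) + (4 * k + 3) + 1) = p + 4
      by case_cross; lia.
    have -> : cross (4 * k + 3) (p + 2 - (4 * k + 3)) (p + 3 - (4 * k + 3) + (4 * k + 3) - 1) = p + 2
      by case_cross; lia.
    move=> h.
    rewrite c3_rot; try (apply: pt_neq; lia).
    by rewrite -c3_inv groupV.
have S3 d a0 : 1 <= a0 -> a0 + 6 + 2 * d <= m.+1 ->
    (tperm (pt m a0) (pt m (a0 + 2)) * tperm (pt m (a0 + 4 + 2 * d)) (pt m (a0 + 6 + 2 * d)))%g \in G.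
  elim: d => [|d IH] h1 h2.
  - rewrite muln0 !addn0.
    have -> : forall x y z w : 'I_m.+1, (tperm x y * tperm z w = c3 x y z * c3 y z w)%g.
      by move=> x y z w; rewrite /c3 mulgA -(mulgA _ _ (tperm y z)) tperm2 mulg1.
    apply: groupM; first by apply: S2; lia.
    have := S2 (a0 + 2) ltac:(lia) ltac:(lia).
    have -> : a0 + 2 + 2 = a0 + 4 by lia.
    by have -> : a0 + 2 + 4 = a0 + 6 by lia.
  - have hs : c3 (pt m (a0 + 4 + 2 * d)) (pt m (a0 + 4 + 2 * d + 4)) (pt m (a0 + 4 + 2 * d + 2)) \in G.
      have := S2 (a0 + 4 + 2 * d) ltac:(lia) ltac:(lia).
      rewrite -groupV c3_inv => h.
      rewrite c3_rot; try (apply: pt_neq; lia).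
      done.
    have := groupJ (IH h1 ltac:(lia)) hs.
    rewrite conjMg !tpermJ /c3 !permM.
    rewrite (tpermD (x := pt m (a0 + 4 + 2 * d))); try (apply: pt_neq; lia).
    rewrite tpermD; try (apply: pt_neq; lia).
    rewrite (tpermD (x := pt m (a0 + 4 + 2 * d))); try (apply: pt_neq; lia).
    rewrite tpermD; try (apply: pt_neq; lia).
    have -> : a0 + 6 + 2 * d = a0 + 4 + 2 * d + 2 by lia.
    rewrite !tpermL.
    rewrite (tpermD (x := pt m (a0 + 4 + 2 * d))); try (apply: pt_neq; lia).
    rewrite tpermR.
    have -> : a0 + 4 + 2 * d.+1 = a0 + 4 + 2 * d + 2 by lia.
    have -> : a0 + 6 + 2 * d.+1 = a0 + 4 + 2 * d + 4 by lia.
    done.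
have ha := odd_double_half a; have hb := odd_double_half b.
rewrite ab in ha; move: ha hb; rewrite -!muln2; case: (odd b) => /= ha hb.
all: move: u; rewrite /= !inE => u; rewrite !string_tp //.
all: case: (leqP (a + 4) b) => hab.
1,3: have := S3 (b./2 - a./2 - 2) a a1 ltac:(lia);
     (have e1 : a + 4 + 2 * (b./2 - a./2 - 2) = b by lia);
     (have e2 : a + 6 + 2 * (b./2 - a./2 - 2) = b + 2 by lia);
     by rewrite e1 e2.
all: have := S3 (a./2 - b./2 - 2) b b1 ltac:(lia);
     (have e1 : b + 4 + 2 * (a./2 - b./2 - 2) = a by lia);
     (have e2 : b + 6 + 2 * (a./2 - b./2 - 2) = a + 2 by lia);
     by rewrite e1 e2 -groupV invMg !tpermV.
Qed.
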